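(* Let $n\ge 2$. Each inverse subsemigroup of $(S_n,\cdot,{}^{-1})$ generated by fewer than $n$ elements lies in the variety of inverse semigroups (algebras of type $(2,1)$) generated by the $6$-element Brandt monoid $(B_2^1,\cdot,{}^{-1})$.
   Context: For $n\ge2$, $(S_n,\cdot,{}^{-1})$ is the inverse semigroup of partial one-to-one transformations of $\{0,1,\dots,3n+2\}$ (acting on the right, composition $x(\alpha\beta)=(x\alpha)\beta$, ${}^{-1}$ the inverse partial map) generated by the $n+1$ partial maps $\chi:\ n\mapsto 2n+1,\ n+1\mapsto 2n+2$ (undefined elsewhere) and, for $i=1,\dots,n$, $\chi_i:\ i-1\mapsto i,\ n+1+i\mapsto n+i,\ 2n+1+i\mapsto 2n+2+i$ (undefined elsewhere). The $6$-element Brandt monoid is $B_2^1$, where $B_2=\langle c,d\mid cdc=c,\ dcd=d,\ c^2=d^2=0\rangle=\{c,d,cd,dc,0\}$ and $1$ is an adjoined identity; it is an inverse semigroup, $s^{-1}$ denoting the unique inverse of $s$ (so $c^{-1}=d$, $d^{-1}=c$, and $1,cd,dc,0$ are self-inverse). *)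

(* Defs.v *)
From mathcomp Require Import all_boot.
Set Implicit Arguments. Unset Strict Implicit. Unset Printing Implicit Defensive.

Inductive term : Type :=
| TVar : nat -> term
| TMul : term -> term -> term
| TInv : term -> term.

Fixpoint teval (A : Type) (mul : A -> A -> A) (inv : A -> A) (v : nat -> A)
  (t : term) : A :=
  match t with
  | TVar k => v k
  | TMul s u => mul (teval mul inv v s) (teval mul inv v u)
  | TInv s => inv (teval mul inv v s)
  end.

Definition satisfies (A : Type) (mul : A -> A -> A) (inv : A -> A) (s t : term) :=
  forall v : nat -> A, teval mul inv v s = teval mul inv v t.

Definition satisfies_on (A : Type) (mul : A -> A -> A) (inv : A -> A)
  (P : A -> Prop) (s t : term) :=
  forall v : nat -> A, (forall k, P (v k)) ->
    teval mul inv v s = teval mul inv v t.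

(* B_2 realised by matrix units: E i j * E k l = (j == k) ? E i l : 0 ;
   c = E false true, d = E true false, cd = E false false, dc = E true true. *)
Inductive B21 : Type := BOne | BZero | BE of bool & bool.

Definition B21_mul (x y : B21) : B21 :=
  match x, y with
  | BOne, _ => y
  | _, BOne => x
  | BZero, _ => BZero
  | _, BZero => BZero
  | BE i j, BE k l => if j == k then BE i l else BZero
  end.

Definition B21_inv (x : B21) : B21 :=
  match x with
  | BE i j => BE j i
  | _ => x
  end.

Definition Bc : B21 := BE false true.
Definition Bd : B21 := BE true false.

Definition N3 (n : nat) := (3 * n + 3)%N.

Definition pinj (n : nat) := {ffun 'I_(N3 n) -> option 'I_(N3 n)}.

(* composition acting on the right: x (a b) = (x a) b *)
Definition pmul (n : nat) (a b : pinj n) : pinj n :=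
  [ffun x => obind b (a x)].

(* inverse partial map (the true inverse for injective partial maps) *)
Definition pinv (n : nat) (a : pinj n) : pinj n :=
  [ffun y => [pick x | a x == Some y]].

Definition pmap_of (n : nat) (f : nat -> option nat) : pinj n :=
  [ffun x => obind (fun y => insub y) (f (nat_of_ord x))].

Definition chi_fun (n : nat) (x : nat) : option nat :=
  if x == n then Some (2 * n + 1)%N
  else if x == n.+1 then Some (2 * n + 2)%N
  else None.

Definition chii_fun (n i : nat) (x : nat) : option nat :=
  if x == i.-1 then Some i
  else if x == (n + 1 + i)%N then Some (n + i)%N
  else if x == (2 * n + 1 + i)%N then Some (2 * n + 2 + i)%N
  else None.

Definition chi (n : nat) : pinj n := pmap_of n (chi_fun n).
Definition chii (n i : nat) : pinj n := pmap_of n (chii_fun n i).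

Inductive gen (n : nat) (X : pinj n -> Prop) : pinj n -> Prop :=
| gen_base a : X a -> gen X a
| gen_mul a b : gen X a -> gen X b -> gen X (pmul a b)
| gen_inv a : gen X a -> gen X (pinv a).

Definition Sn_gens (n : nat) (a : pinj n) : Prop :=
  a = chi n \/ exists i, (1 <= i <= n)%N /\ a = chii n i.

Definition in_Sn (n : nat) (a : pinj n) : Prop := gen (@Sn_gens n) a.

Definition gen_seq (n : nat) (X : seq (pinj n)) : pinj n -> Prop :=
  gen (fun a => a \in X).

(* an inverse subsemigroup (given by its carrier P, closed under pmul, pinv)
   lies in the variety generated by B_2^1: it satisfies every identity of B_2^1 *)
Definition in_var_B21 (n : nat) (P : pinj n -> Prop) : Prop :=
  forall s t : term, satisfies B21_mul B21_inv s t ->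
    satisfies_on (@pmul n) (@pinv n) P s t.

(* Main.v *)
Require Import Defs.
From mathcomp Require Import all_boot.
From mathcomp Require Import zify.
From Stdlib Require Import Lia.
Set Implicit Arguments. Unset Strict Implicit. Unset Printing Implicit Defensive.

Definition bmap (b : B21) (x : bool) : option bool :=
  match b with BOne => Some x | BZero => None | BE i j => if x == i then Some j else None end.

Lemma bmap_mul b c x : bmap (B21_mul b c) x = obind (bmap c) (bmap b x).
Proof. by case: b => [||[] []]; case: c => [||[] []]; case: x. Qed.

Lemma bmap_inv b x y : bmap (B21_inv b) y = Some x <-> bmap b x = Some y.
Proof. by case: b => [||[] []]; case: x; case: y. Qed.

Lemma bmap_inj b x x' y : bmap b x = Some y -> bmap b x' = Some y -> x = x'.
Proof. by case: b => [||[] []]; case: x; case: x'; case: y. Qed.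

Section Abstract.
Variable n : nat.
Notation N := (N3 n).
Notation P := (pinj n).

Lemma pmulE (a b : P) x : pmul a b x = obind b (a x).
Proof. by rewrite /pmul ffunE. Qed.

Lemma pinvE (a : P) y x : pinv a y = Some x -> a x = Some y.
Proof. rewrite /pinv ffunE; case: pickP => // z /eqP H [<-]; exact H. Qed.

Lemma pinvN (a : P) y : pinv a y = None -> forall x, a x <> Some y.
Proof. rewrite /pinv ffunE; case: pickP => // H _ x Hx. by move: (H x); rewrite Hx eqxx. Qed.

Definition injP (a : P) := forall x x' y, a x = Some y -> a x' = Some y -> x = x'.

Lemma pinvS (a : P) x y : injP a -> a x = Some y -> pinv a y = Some x.
Proof.
move=> Hi Hx; rewrite /pinv ffunE; case: pickP => [z /eqP Hz|H].
  by rewrite (Hi _ _ _ Hz Hx).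
by move: (H x); rewrite Hx eqxx.
Qed.

Lemma inj_pmul (a b : P) : injP a -> injP b -> injP (pmul a b).
Proof.
move=> Ha Hb x x' y; rewrite !pmulE.
case Ex: (a x) => [u|] //=; case Ex': (a x') => [u'|] //= H1 H2.
have := Hb _ _ _ H1 H2 => Eu; subst u'. exact: Ha _ _ _ Ex Ex'.
Qed.

Lemma inj_pinv (a : P) : injP (pinv a).
Proof. move=> x x' y H1 H2. have := pinvE H1; have := pinvE H2. by move=> -> []. Qed.

Definition compat (a b c d : bool) := (a == b) && (c == d) || (a == c) && (b == d).

Definition compatV (k : 'I_N -> bool) (a : P) :=
  forall x x' y y', a x = Some y -> a x' = Some y' -> compat (k x) (k y) (k x') (k y').

Definition hasE (k : 'I_N -> bool) (a : P) (b c : bool) :=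
  [exists x : 'I_N, (k x == b) && (if a x is Some y then k y == c else false)].

Definition mkB (k : 'I_N -> bool) (a : P) : B21 :=
  if hasE k a false true then BE false true else
  if hasE k a true false then BE true false else
  match hasE k a false false, hasE k a true true with
  | true, true => BOne | true, false => BE false false
  | false, true => BE true true | false, false => BZero end.

Lemma hasEP k (a : P) b c : reflect (exists x y, [/\ a x = Some y, k x = b & k y = c]) (hasE k a b c).
Proof.
apply: (iffP existsP) => [[x /andP[/eqP Hx]]|[x [y [H1 H2 H3]]]].
  case Ea: (a x) => [y|] // /eqP Hy; by exists x, y.
by exists x; rewrite H1 H2 H3 !eqxx.
Qed.

Lemma mkB_hom k (a : P) : compatV k a -> forall x y, a x = Some y -> bmap (mkB k a) (k x) = Some (k y).
Proof.
move=> Hc x y Hxy.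
have Hh : hasE k a (k x) (k y) by apply/hasEP; exists x, y.
have Hno : forall b c, hasE k a b c -> compat (k x) (k y) b c.
  move=> b c /hasEP [x' [y' [H1 <- <-]]]; exact: Hc Hxy H1.
rewrite /mkB.
case E1: (hasE k a false true).
  move: (Hno _ _ E1); rewrite /compat; case: (k x) (k y) => [] [] //=.
case E2: (hasE k a true false).
  move: (Hno _ _ E2); rewrite /compat; case: (k x) (k y) => [] [] //=.
case E3: (hasE k a false false); case E4: (hasE k a true true); move: Hh;
  case: (k x) (k y) => [] [] //=; by rewrite ?E1 ?E2 ?E3 ?E4.
Qed.

Lemma mkB_dom k (a : P) b c : bmap (mkB k a) b = Some c -> hasE k a b c.
Proof.
rewrite /mkB.
case E1: (hasE k a false true); case E2: (hasE k a true false);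
case E3: (hasE k a false false); case E4: (hasE k a true true);
case: b; case: c => //=.
Qed.

Definition validB (k : 'I_N -> bool) (a : P) :=
  exists b, forall x y, a x = Some y -> bmap b (k x) = Some (k y).

Lemma validB_compat k (a : P) : validB k a -> compatV k a.
Proof.
move=> [b Hb] x x' y y' H1 H2; move: (Hb _ _ H1) (Hb _ _ H2); clear Hb.
rewrite /compat; case: b => [||i j] /=.
- by move=> [->] [->]; rewrite !eqxx.
- by [].
- case: eqP => // -> [<-]; case: eqP => // -> [<-]; by rewrite !eqxx orbT.
Qed.

Lemma validB_pmul k (a b : P) : validB k a -> validB k b -> validB k (pmul a b).
Proof.
move=> [ba Ha] [bb Hb]; exists (B21_mul ba bb) => x y.
rewrite pmulE bmap_mul; case E: (a x) => [u|] //= H.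
by rewrite (Ha _ _ E) /= (Hb _ _ H).
Qed.

Lemma validB_pinv k (a : P) : validB k a -> validB k (pinv a).
Proof.
move=> [ba Ha]; exists (B21_inv ba) => x y H.
apply/bmap_inv; exact: Ha _ _ (pinvE H).
Qed.

Section AL.
Variable w : nat -> P.
Hypothesis winj : forall k, injP (w k).
Hypothesis H1 : forall q q' : 'I_N, q <> q' ->
  exists kap, (forall k, compatV kap (w k)) /\ kap q <> kap q'.
Hypothesis H2 : forall k a, w k a = None ->
  exists kap, (forall k, compatV kap (w k)) /\ forall x y, w k x = Some y -> kap x <> kap a.
Hypothesis H3 : forall k a, (forall x, w k x <> Some a) ->
  exists kap, (forall k, compatV kap (w k)) /\ forall x y, w k x = Some y -> kap y <> kap a.

Notation ev := (teval (@pmul n) (@pinv n) w).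
Notation evB b := (teval B21_mul B21_inv b).

Lemma ev_inj t : injP (ev t).
Proof.
elim: t => [k|s Hs u Hu|s Hs] /=; [exact: winj| exact: inj_pmul | exact: inj_pinv].
Qed.

Lemma hom_term kap : (forall k, compatV kap (w k)) ->
  forall t x y, ev t x = Some y -> bmap (evB (fun k => mkB kap (w k)) t) (kap x) = Some (kap y).
Proof.
move=> Hk; elim => [k|s Hs u Hu|s Hs] x y /=.
- exact: mkB_hom.
- rewrite pmulE bmap_mul; case E: (ev s x) => [z|] //= H.
  by rewrite (Hs _ _ E) /= (Hu _ _ H).
- move=> H; apply/bmap_inv; apply: Hs; exact: pinvE.
Qed.

Definition goodK kap := forall k, compatV kap (w k).

Lemma kill t :
  (forall x, ev t x = None -> exists kap, goodK kap /\
      bmap (evB (fun k => mkB kap (w k)) t) (kap x) = None) /\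
  (forall y, (forall x, ev t x <> Some y) -> exists kap, goodK kap /\
      forall c, bmap (evB (fun k => mkB kap (w k)) t) c <> Some (kap y)).
Proof.
elim: t => [k|s [Hs1 Hs2] u [Hu1 Hu2]|s [Hs1 Hs2]] /=.
- split.
  + move=> x Hx; have [kap [Hg Hn]] := H2 Hx; exists kap; split => //.
    case E: (bmap _ _) => [c|] //; have /hasEP [x' [y' [E1 E2 E3]]] := mkB_dom E.
    by have := Hn _ _ E1; rewrite E2.
  + move=> y Hy; have [kap [Hg Hn]] := H3 Hy; exists kap; split => // c E.
    have /hasEP [x' [y' [E1 E2 E3]]] := mkB_dom E.
    by have := Hn _ _ E1; rewrite E3.
- split.
  + move=> x; rewrite pmulE; case E: (ev s x) => [z|] /=.
    * move=> Hz; have [kap [Hg Hn]] := Hu1 _ Hz; exists kap; split => //.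
      by rewrite bmap_mul (hom_term Hg E) /=.
    * move=> _; have [kap [Hg Hn]] := Hs1 _ E; exists kap; split => //.
      by rewrite bmap_mul Hn.
  + move=> y Hy.
    case: (pickP (fun z => ev u z == Some y)) => [z /eqP Ez|Hn].
    * have Hz : forall x, ev s x <> Some z.
        move=> x Ex; apply: (Hy x); by rewrite pmulE Ex.
      have [kap [Hg Hk]] := Hs2 _ Hz; exists kap; split => // c.
      rewrite bmap_mul; case E: (bmap _ c) => [c'|] //= E'.
      have E2 := hom_term Hg Ez.
      have := bmap_inj E' E2 => Ec; subst c'. exact: Hk E.
    * have Hz : forall x, ev u x <> Some y by move=> x Ex; move: (Hn x); rewrite Ex eqxx.
      have [kap [Hg Hk]] := Hu2 _ Hz; exists kap; split => // c.
      rewrite bmap_mul; case E: (bmap _ c) => [c'|] //=; exact: Hk.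
- split.
  + move=> x Hx; have Hz : forall z, ev s z <> Some x := pinvN Hx.
    have [kap [Hg Hk]] := Hs2 _ Hz; exists kap; split => //.
    case E: (bmap _ _) => [c|] //. by move/bmap_inv: E => /Hk.
  + move=> y Hy; have Hz : ev s y = None.
      case E: (ev s y) => [z|] //; by have := Hy z (pinvS (@ev_inj s) E).
    have [kap [Hg Hk]] := Hs1 _ Hz; exists kap; split => // c /bmap_inv E.
    by rewrite Hk in E.
Qed.

Lemma AL s t : satisfies B21_mul B21_inv s t -> ev s = ev t.
Proof.
move=> Hst.
have key : forall s t, satisfies B21_mul B21_inv s t ->
   forall x y, ev s x = Some y -> ev t x = Some y.
  move=> s' t' Hs x y Hx.
  case E: (ev t' x) => [y'|].
    case: (y =P y') => [-> //|Hne].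
    have [kap [Hg Hk]] := H1 Hne.
    have A1 := hom_term Hg Hx; have A2 := hom_term Hg E.
    rewrite (Hs (fun k => mkB kap (w k))) A2 in A1. by case: A1 => /esym.
  have [Kill1 _] := kill t'. have [kap [Hg Hk]] := Kill1 _ E.
  have A1 := hom_term Hg Hx. by rewrite (Hs (fun k => mkB kap (w k))) Hk in A1.
apply/ffunP => x.
case E: (ev s x) => [y|]; first by rewrite (key _ _ Hst _ _ E).
case E': (ev t x) => [y|] //.
have Hts : satisfies B21_mul B21_inv t s by move=> v; rewrite Hst.
by rewrite (key _ _ Hts _ _ E') in E.
Qed.

End AL.
End Abstract.

Section Sn.
Variable n : nat.
Hypothesis hn : 2 <= n.
Notation N := (N3 n).
Notation P := (pinj n).
Variable X : seq P.
Hypothesis HX : forall x, x \in X -> in_Sn x.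
Hypothesis hsz : size X < n.

Lemma N3E : N = 3*n+3. Proof. by []. Qed.

Definition posn (m : nat) : nat :=
  if m <= n then m else if m <= 2*n+1 then 3*n+2 - m else m.

Lemma posn_cases m : (m <= n /\ posn m = m) \/ (n < m <= 2*n+1 /\ posn m = 3*n+2-m)
  \/ (2*n+1 < m /\ posn m = m).
Proof. rewrite /posn; case: ifP => H1; first by left. case: ifP => H2; [right;left|right;right]; lia. Qed.

Lemma posn_lo m : m <= n -> posn m = m. Proof. have := posn_cases m; lia. Qed.
Lemma posn_mid m : n < m -> m <= 2*n+1 -> posn m = 3*n+2-m. Proof. have := posn_cases m; lia. Qed.
Lemma posn_hi m : 2*n+1 < m -> posn m = m. Proof. have := posn_cases m; lia. Qed.
Lemma posn_lt m : m < N -> posn m < N. Proof. rewrite N3E; have := posn_cases m; lia. Qed.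
Lemma posn_inv m : m < N -> posn (posn m) = m.
Proof. rewrite N3E => H; have := posn_cases m; have := posn_cases (posn m); lia. Qed.
Lemma posn_inj m m' : m < N -> m' < N -> posn m = posn m' -> m = m'.
Proof. move=> H H' E; by rewrite -(posn_inv H) E posn_inv. Qed.

Definition PRE0 (P Q P' : nat) : Prop :=
  (P <= n /\ P' = P + (2*n+2) /\ Q <= n)
  \/ (n+1 <= P <= 2*n /\ (P' + P = 2*n \/ P' + P = 4*n+2) /\ (Q = P \/ Q = P+1))
  \/ (n+2 <= P <= 2*n+1 /\ (P' + P = 2*n+2 \/ P' + P = 4*n+4) /\ (Q = P \/ Q+1 = P))
  \/ (P = 2*n+1 /\ P' = n /\ (Q = P \/ Q = P+1))
  \/ (P = n+1 /\ P' = 2*n+2 /\ (Q = P \/ Q+1 = P)).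
Definition PRE P Q P' Q' := Q + P' = Q' + P /\ (PRE0 P Q P' \/ PRE0 P' Q' P).

Ltac tryA := first [left; lia | right; first [left; lia | right; first [left; lia | right; first [left; lia | right; lia]]]].
Ltac leaf := first [exfalso; lia | split; [lia | first [left; tryA | right; tryA]]].
Ltac dall := repeat match goal with H : _ \/ _ |- _ => destruct H | H : _ /\ _ |- _ => destruct H end.

Lemma PRE_inv P Q P' Q' : PRE P Q P' Q' -> PRE Q P Q' P'.
Proof. rewrite /PRE /PRE0 => [[E H]]. dall; leaf. Qed.

Lemma PRE_comp P Q P' Q' S S' : P <> P' -> PRE P Q P' Q' -> PRE Q S Q' S' -> PRE P S P' S'.
Proof. rewrite /PRE /PRE0 => Hne [E1 H1] [E2 H2]. dall; leaf. Qed.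

Definition Good (a : P) := forall (m m' y y' : 'I_N), a m = Some y -> a m' = Some y' -> m <> m' ->
  PRE (posn m) (posn y) (posn m') (posn y').

Lemma Good_inj a : Good a -> injP a.
Proof.
move=> Ha m m' y H1 H2; case: (m =P m') => // Hne; exfalso.
have [E _] := Ha _ _ _ _ H1 H2 Hne.
have : posn m = posn m' by lia.
move/(posn_inj (ltn_ord m) (ltn_ord m')) => /val_inj //.
Qed.

Lemma Good_pmul a b : Good a -> Good b -> Good (pmul a b).
Proof.
move=> Ha Hb m m' s s'; rewrite !pmulE.
case E1: (a m) => [q|] //=; case E2: (a m') => [q'|] //= F1 F2 Hne.
have Hq : q <> q' by move=> Eq; subst q'; apply: Hne; exact: (Good_inj Ha E1 E2).
apply: PRE_comp (Ha _ _ _ _ E1 E2 Hne) (Hb _ _ _ _ F1 F2 Hq).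
by move/(posn_inj (ltn_ord m) (ltn_ord m')) => /val_inj.
Qed.

Lemma Good_pinv a : Good a -> Good (pinv a).
Proof.
move=> Ha y y' m m' H1 H2 Hne.
have E1 := pinvE H1; have E2 := pinvE H2.
have Hm : m <> m' by move=> Em; subst m'; apply: Hne; rewrite E1 in E2; case: E2.
exact: PRE_inv (Ha _ _ _ _ E1 E2 Hm).
Qed.


Lemma pmap_ofE f (m y : 'I_N) : pmap_of n f m = Some y -> f m = Some (nat_of_ord y).
Proof. rewrite /pmap_of ffunE; case: (f m) => //= v; case: insubP => // u _ <- [<-] //. Qed.

Lemma chii_spec i (m y : 'I_N) : chii n i m = Some y ->
  (nat_of_ord m = i - 1 /\ nat_of_ord y = i) \/ (nat_of_ord m = n+1+i /\ nat_of_ord y = n+i)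
  \/ (nat_of_ord m = 2*n+1+i /\ nat_of_ord y = 2*n+2+i).
Proof.
move/pmap_ofE; rewrite /chii_fun.
case: eqP => [-> [<-]|_]; first by left; rewrite subn1.
case: eqP => [-> [<-]|_]; first by right; left.
by case: eqP => [-> [<-]|_] //; right; right.
Qed.

Lemma chi_spec (m y : 'I_N) : chi n m = Some y ->
  (nat_of_ord m = n /\ nat_of_ord y = 2*n+1) \/ (nat_of_ord m = n+1 /\ nat_of_ord y = 2*n+2).
Proof.
move/pmap_ofE; rewrite /chi_fun.
case: eqP => [-> [<-]|_]; first by left.
by case: eqP => [-> [<-]|_] //; right; rewrite addn1.
Qed.

Ltac rwpos := repeat match goal with |- context [posn ?x] =>
  first [rewrite (@posn_lo x); [|lia] | rewrite (@posn_mid x); [|lia|lia] | rewrite (@posn_hi x); [|lia]] end.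

Lemma neq_ord (m m' : 'I_N) : m <> m' -> nat_of_ord m <> nat_of_ord m'.
Proof. by move=> H E; apply: H; apply: val_inj. Qed.

Lemma Good_chii i : 1 <= i <= n -> Good (chii n i).
Proof.
move=> Hi m m' y y' H1 H2 /neq_ord Hne.
have := chii_spec H1; have := chii_spec H2.
have Lm : nat_of_ord m < 3*n+3 := ltn_ord m. have Lm' : nat_of_ord m' < 3*n+3 := ltn_ord m'.
move: (nat_of_ord m) (nat_of_ord m') (nat_of_ord y) (nat_of_ord y') Hne Lm Lm' => a b c d Hne La Lb S1 S2.
dall; subst; rwpos; rewrite /PRE /PRE0; leaf.
Qed.

Lemma Good_chi : Good (chi n).
Proof.
move=> m m' y y' H1 H2 /neq_ord Hne.
have := chi_spec H1; have := chi_spec H2.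
move: (nat_of_ord m) (nat_of_ord m') (nat_of_ord y) (nat_of_ord y') Hne => a b c d Hne S1 S2.
dall; subst; rwpos; rewrite /PRE /PRE0; leaf.
Qed.

Lemma Good_Sn a : in_Sn a -> Good a.
Proof.
elim => [x [->|[i [Hi ->]]]|x z _ Hx _ Hz|x _ Hx].
- exact: Good_chi.
- exact: Good_chii.
- exact: Good_pmul.
- exact: Good_pinv.
Qed.

Lemma Good_gen a : gen_seq X a -> Good a.
Proof.
elim => [x Hx|x z _ Hx _ Hz|x _ Hx].
- apply: Good_Sn; exact: HX.
- exact: Good_pmul.
- exact: Good_pinv.
Qed.

Definition edge (a : P) (u v : nat) : bool :=
  [exists m : 'I_N, (nat_of_ord m == u) && (if a m is Some y then nat_of_ord y == v else false)].

Lemma edgeP (a : P) u v : reflect (exists m y, [/\ a m = Some y, nat_of_ord m = u & nat_of_ord y = v]) (edge a u v).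
Proof.
apply: (iffP existsP) => [[m /andP[/eqP Hm]]|[m [y [H1 H2 H3]]]].
  case E: (a m) => [y|] // /eqP Hy; by exists m, y.
by exists m; rewrite H1 H2 H3 !eqxx.
Qed.

Definition tagb (a : P) (c : nat) : bool :=
  if c == 0 then [|| edge a n (2*n+1), edge a (2*n+1) n, edge a (n+1) (2*n+2) | edge a (2*n+2) (n+1)]
  else edge a (n+1+c) (n+c) || edge a (n+c) (n+1+c).

Lemma edge_pair (a : P) u v u' v' : Good a -> edge a u v -> edge a u' v' ->
  u < N /\ v < N /\ u' < N /\ v' < N /\
  ((u = u' /\ v = v') \/ (u <> u' /\ PRE (posn u) (posn v) (posn u') (posn v'))).
Proof.
move=> Ha /edgeP [m [y [H1 <- <-]]] /edgeP [m' [y' [H2 <- <-]]].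
do 4 (split; first exact: ltn_ord).
case: (m =P m') => [Em|Hne].
  subst m'; rewrite H1 in H2; case: H2 => ->; by left.
right; split; first exact: neq_ord. exact: Ha _ _ _ _ H1 H2 Hne.
Qed.

Lemma tag_uniq (a : P) c1 c2 : Good a -> c1 <= n -> c2 <= n -> tagb a c1 -> tagb a c2 -> c1 = c2.
Proof.
move=> Ha L1 L2; rewrite /tagb.
have key : forall u v u' v', edge a u v -> edge a u' v' ->
   (forall A B A' B', u < N -> v < N -> u' < N -> v' < N ->
      ((u = u' /\ v = v') \/ (u <> u' /\ PRE A B A' B')) ->
      posn u = A -> posn v = B -> posn u' = A' -> posn v' = B' -> c1 = c2) -> c1 = c2.
  move=> u v u' v' E1 E2 K; have [? [? [? [? H]]]] := edge_pair Ha E1 E2. exact: K H _ _ _ _.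
case: eqP => [Z1|Z1]; case: eqP => [Z2|Z2]; try lia; move=> E1 E2;
  repeat (case/orP: E1 => E1); repeat (case/orP: E2 => E2);
  apply: (key _ _ _ _ E1 E2) => A B A' B' La Lb Lc Ld H; rwpos => EA EB EC ED; subst A B A' B';
  rewrite /PRE /PRE0 in H; dall; lia.
Qed.

Definition tagOf (a : P) : option nat :=
  if [pick c : 'I_n.+1 | tagb a c] is Some c then Some (nat_of_ord c) else None.
Definition TS := pmap tagOf X.

Lemma GoodX x : x \in X -> Good x.
Proof. move=> Hx; apply: Good_Sn; exact: HX. Qed.

Lemma tag_in x c : x \in X -> c <= n -> tagb x c -> c \in TS.
Proof.
move=> Hx Hc Ht; rewrite /TS mem_pmap; apply/mapP; exists x => //.
rewrite /tagOf; case: pickP => [c' Hc'|H].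
  congr Some; exact: (tag_uniq (GoodX Hx) Hc (ltn_ord c') Ht Hc').
have Hc1 : c < n.+1 by rewrite ltnS.
by have := H (Ordinal Hc1); rewrite /= Ht.
Qed.

Lemma size_S : size TS < n.
Proof. rewrite /TS size_pmap; apply: leq_ltn_trans hsz; exact: count_size. Qed.

Lemma miss_gen (L : seq nat) : uniq L -> size L = n -> exists2 j, j \in L & j \notin TS.
Proof.
move=> U E; case: (boolP (all (fun j => j \in TS) L)) => [/allP H|/allPn [j Hj HjS]]; last by exists j.
exfalso; have := uniq_leq_size U H; rewrite E => /leq_ltn_trans /(_ size_S); by rewrite ltnn.
Qed.

Lemma miss0 : exists j, [/\ 1 <= j, j <= n & j \notin TS].
Proof.
have [j Hj HS] := @miss_gen (iota 1 n) (iota_uniq _ _) (size_iota _ _).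
exists j; move: Hj; rewrite mem_iota => Hj; split => //; lia.
Qed.

Lemma miss1 : 0 \in TS -> exists j, [/\ 1 <= j, j <= n - 1 & j \notin TS].
Proof.
move=> H0; have U : uniq (0 :: iota 1 (n-1)) by rewrite /= iota_uniq mem_iota andbT; lia.
have [|j Hj HS] := @miss_gen _ U; first by rewrite /= size_iota; lia.
exists j; move: Hj; rewrite inE mem_iota => /orP [/eqP E|Hj]; first by subst; rewrite H0 in HS.
split => //; lia.
Qed.

Lemma miss2 : 0 \in TS -> exists j, [/\ 2 <= j, j <= n & j \notin TS].
Proof.
move=> H0; have U : uniq (0 :: iota 2 (n-1)) by rewrite /= iota_uniq mem_iota andbT; lia.
have [|j Hj HS] := @miss_gen _ U; first by rewrite /= size_iota; lia.
exists j; move: Hj; rewrite inE mem_iota => /orP [/eqP E|Hj]; first by subst; rewrite H0 in HS.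
split => //; lia.
Qed.

Section Col.
Variables (f0 g f2 : nat -> bool).
Definition kpos (Pp : nat) : bool :=
  if Pp <= n then f0 Pp else if Pp <= 2*n+1 then g (2*n+1 - Pp) else f2 (Pp - (2*n+2)).

Lemma kpos_lo Pp : Pp <= n -> kpos Pp = f0 Pp.
Proof. by rewrite /kpos => ->. Qed.
Lemma kpos_mid Pp : n < Pp -> Pp <= 2*n+1 -> kpos Pp = g (2*n+1 - Pp).
Proof. rewrite /kpos => H1 ->; by rewrite leqNgt H1. Qed.
Lemma kpos_hi Pp : 2*n+1 < Pp -> kpos Pp = f2 (Pp - (2*n+2)).
Proof. rewrite /kpos => H; have -> : (Pp <= n) = false by lia. by have -> : (Pp <= 2*n+1) = false by lia. Qed.

Definition VK1 := forall v w, v <= n -> w <= n -> compat (f0 v) (f0 w) (f2 v) (f2 w).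
Definition VK2 i := compat (g i) (g (i-1)) (f0 (i-1)) (f0 i) && compat (g i) (g (i-1)) (f2 (i-1)) (f2 i).
Definition VK3 := compat (g 0) (f2 0) (f0 n) (g n).

Lemma compat_diag a b : compat a a b b. Proof. by rewrite /compat !eqxx. Qed.
Lemma compat_refl a b : compat a b a b. Proof. by rewrite /compat !eqxx orbT. Qed.
Lemma compat_swap a b c d : compat a b c d = compat c d a b.
Proof. by case: a; case: b; case: c; case: d. Qed.
Lemma compat_rev a b c d : compat a b c d = compat b a d c.
Proof. by case: a; case: b; case: c; case: d. Qed.

Definition midE (Pp Q : nat) i := (Pp = 2*n+1-i /\ Q = 2*n+2-i) \/ (Pp = 2*n+2-i /\ Q = 2*n+1-i).
Definition chiE (Pp Q : nat) := (Pp = n /\ Q = n+1) \/ (Pp = n+1 /\ Q = n) \/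
   (Pp = 2*n+1 /\ Q = 2*n+2) \/ (Pp = 2*n+2 /\ Q = 2*n+1).

Lemma compat_pos0 Pp Q Pp' Q' : Q + Pp' = Q' + Pp -> PRE0 Pp Q Pp' -> VK1 ->
  (forall i, 1 <= i <= n -> midE Pp Q i -> VK2 i) -> (chiE Pp Q -> VK3) ->
  compat (kpos Pp) (kpos Q) (kpos Pp') (kpos Q').
Proof.
move=> Esh H V1 V2 V3.
case: H => [[A1 [A2 A3]]|[[L1 [L3 L4]]|[[R1 [R3 R4]]|[[G1 [G2 G3]]|[G1 [G2 G3]]]]]].
- rewrite kpos_lo // kpos_lo // kpos_hi; last by lia. rewrite kpos_hi; last by lia.
  have -> : Pp' - (2*n+2) = Pp by lia. have -> : Q' - (2*n+2) = Q by lia. exact: V1.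
- case: L4 => L4.
    have -> : Q' = Pp' by lia. subst Q; exact: compat_diag.
  have Hi : 1 <= 2*n+1 - Pp <= n by lia.
  have hm : midE Pp Q (2*n+1 - Pp) by left; split; lia.
  move: (V2 _ Hi hm) => /andP [W1 W2].
  rewrite (kpos_mid (Pp:=Pp)); [|lia|lia]. rewrite (kpos_mid (Pp:=Q)); [|lia|lia].
  have -> : 2*n+1 - Q = (2*n+1 - Pp) - 1 by lia.
  case: L3 => L3.
  + rewrite kpos_lo; last by lia. rewrite kpos_lo; last by lia.
    have -> : Pp' = (2*n+1 - Pp) - 1 by lia. have -> : Q' = 2*n+1 - Pp by lia. exact: W1.
  + rewrite kpos_hi; last by lia. rewrite kpos_hi; last by lia.
    have -> : Pp' - (2*n+2) = (2*n+1 - Pp) - 1 by lia. have -> : Q' - (2*n+2) = 2*n+1 - Pp by lia.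
    exact: W2.
- case: R4 => R4.
    have -> : Q' = Pp' by lia. subst Q; exact: compat_diag.
  have Hi : 1 <= 2*n+2 - Pp <= n by lia.
  have hm : midE Pp Q (2*n+2 - Pp) by right; split; lia.
  move: (V2 _ Hi hm) => /andP [W1 W2].
  rewrite (kpos_mid (Pp:=Pp)); [|lia|lia]. rewrite (kpos_mid (Pp:=Q)); [|lia|lia].
  have -> : 2*n+1 - Q = 2*n+2 - Pp by lia.
  have -> : 2*n+1 - Pp = (2*n+2 - Pp) - 1 by lia.
  rewrite compat_rev.
  case: R3 => R3.
  + rewrite kpos_lo; last by lia. rewrite kpos_lo; last by lia.
    have -> : Pp' = 2*n+2 - Pp by lia. have -> : Q' = (2*n+2 - Pp) - 1 by lia. exact: W1.
  + rewrite kpos_hi; last by lia. rewrite kpos_hi; last by lia.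
    have -> : Pp' - (2*n+2) = 2*n+2 - Pp by lia. have -> : Q' - (2*n+2) = (2*n+2 - Pp) - 1 by lia.
    exact: W2.
- case: G3 => G3.
    have -> : Q' = Pp' by lia. subst Q; exact: compat_diag.
  have W : VK3 by apply: V3; right; right; left; split; lia.
  rewrite (kpos_mid (Pp:=Pp)); [|lia|lia]. rewrite kpos_hi; last by lia.
  rewrite kpos_lo; last by lia. rewrite (kpos_mid (Pp:=Q')); [|lia|lia].
  have -> : 2*n+1 - Pp = 0 by lia. have -> : Q - (2*n+2) = 0 by lia.
  have -> : Pp' = n by lia. have -> : 2*n+1 - Q' = n by lia. exact: W.
- case: G3 => G3.
    have -> : Q' = Pp' by lia. subst Q; exact: compat_diag.
  have W : VK3 by apply: V3; right; left; split; lia.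
  rewrite (kpos_mid (Pp:=Pp)); [|lia|lia]. rewrite kpos_lo; last by lia.
  rewrite kpos_hi; last by lia. rewrite (kpos_mid (Pp:=Q')); [|lia|lia].
  have -> : 2*n+1 - Pp = n by lia. have -> : Q = n by lia.
  have -> : Pp' - (2*n+2) = 0 by lia. have -> : 2*n+1 - Q' = 0 by lia.
  by rewrite compat_swap compat_rev.
Qed.

Lemma compat_pos Pp Q Pp' Q' : PRE Pp Q Pp' Q' -> VK1 ->
  (forall i, 1 <= i <= n -> midE Pp Q i \/ midE Pp' Q' i -> VK2 i) -> (chiE Pp Q \/ chiE Pp' Q' -> VK3) ->
  compat (kpos Pp) (kpos Q) (kpos Pp') (kpos Q').
Proof.
move=> [E [H|H]] V1 V2 V3.
- apply: (compat_pos0 E H V1).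
  + move=> i Hi Hm; apply: V2 => //; by left.
  + move=> Hc; apply: V3; by left.
- rewrite compat_swap; have E' : Q' + Pp = Q + Pp' by lia.
  apply: (compat_pos0 E' H V1).
  + move=> i Hi Hm; apply: V2 => //; by right.
  + move=> Hc; apply: V3; by right.
Qed.

End Col.

Definition kapF f0 g f2 (m : 'I_N) := kpos f0 g f2 (posn m).

Definition OKF f0 g f2 := VK1 f0 f2 /\ (forall i, 1 <= i <= n -> i \in TS -> VK2 f0 g f2 i)
  /\ (0 \in TS -> VK3 f0 g f2).

Lemma pos_val (m : 'I_N) U : posn m = U -> nat_of_ord m = posn U.
Proof. move=> <-; by rewrite posn_inv. Qed.

Lemma mid_tag (x : P) (m y : 'I_N) i : x m = Some y -> 1 <= i <= n -> midE (posn m) (posn y) i -> tagb x i.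
Proof.
move=> H Hi; rewrite /tagb; have -> : (i == 0) = false by lia.
case=> [[E1 E2]|[E1 E2]]; have F1 := pos_val E1; have F2 := pos_val E2; move: F1 F2; rwpos => F1 F2.
- apply/orP; left; apply/edgeP; exists m, y; split => //; lia.
- apply/orP; right; apply/edgeP; exists m, y; split => //; lia.
Qed.

Lemma chi_tag (x : P) (m y : 'I_N) : x m = Some y -> chiE (posn m) (posn y) -> tagb x 0.
Proof.
move=> H; rewrite /tagb /=.
case=> [[E1 E2]|[[E1 E2]|[[E1 E2]|[E1 E2]]]]; have F1 := pos_val E1; have F2 := pos_val E2;
  move: F1 F2; rwpos => F1 F2.
- apply/orP; left; apply/edgeP; exists m, y; split => //; lia.
- apply/orP; right; apply/orP; left; apply/edgeP; exists m, y; split => //; lia.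
- apply/orP; right; apply/orP; right; apply/orP; left; apply/edgeP; exists m, y; split => //; lia.
- apply/orP; right; apply/orP; right; apply/orP; right; apply/edgeP; exists m, y; split => //; lia.
Qed.

Lemma valid_X f0 g f2 (x : P) : x \in X -> OKF f0 g f2 -> compatV (kapF f0 g f2) x.
Proof.
move=> Hx [V1 [V2 V3]] m m' y y' H1 H2.
case: (m =P m') => [Em|Hne].
  subst m'; rewrite H1 in H2; case: H2 => <-; exact: compat_refl.
have HP := GoodX Hx H1 H2 Hne.
rewrite /kapF; apply: (compat_pos HP V1).
- move=> i Hi Hm; apply: V2 => //; apply: (tag_in Hx); first lia.
  case: Hm => Hm; [exact: mid_tag H1 Hi Hm | exact: mid_tag H2 Hi Hm].
- move=> Hc; apply: V3; apply: (tag_in Hx) => //.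
  case: Hc => Hc; [exact: chi_tag H1 Hc | exact: chi_tag H2 Hc].
Qed.

Lemma valid_gen f0 g f2 (a : P) : OKF f0 g f2 -> gen_seq X a -> validB (kapF f0 g f2) a.
Proof.
move=> Hok; elim => [x Hx|x z _ Hx _ Hz|x _ Hx].
- exists (mkB (kapF f0 g f2) x) => m y H. move: (valid_X Hx Hok) => Hc. exact: (mkB_hom Hc H).
- exact: validB_pmul.
- exact: validB_pinv.
Qed.

Lemma OK_copy f : (f 0 != f n) || (0 \notin TS) -> OKF f (fun r => ~~ f r) f.
Proof.
move=> H; split; [|split].
- move=> v w _ _; exact: compat_refl.
- move=> i _ _; rewrite /VK2 andbb /compat; by case: (f i); case: (f (i-1)).
- move=> H0; rewrite H0 orbF in H; rewrite /VK3 /compat; move: H; by case: (f 0); case: (f n).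
Qed.

Lemma OK_J j : 1 <= j <= n -> j \notin TS -> OKF (fun r => j <= r) (fun r => j <= r) (fun r => j <= r).
Proof.
move=> Hj HT; split; [|split].
- move=> v w _ _; exact: compat_refl.
- move=> i Hi Hin; have Hij : i != j by apply: contraNneq HT => <-.
  rewrite /VK2 /=; have -> : (j <= i) = (j <= i - 1) by apply/idP/idP => H'; lia.
  by rewrite /compat !eqxx.
- move=> _; exact: compat_diag.
Qed.

Lemma OK_B j c e : 1 <= j <= n -> j \notin TS ->
  OKF (fun _ => c) (fun r => (j <= r) (+) e) (fun _ => ~~ c).
Proof.
move=> Hj HT; split; [|split].
- move=> v w _ _; exact: compat_diag.
- move=> i Hi Hin; have Hij : i != j by apply: contraNneq HT => <-.
  rewrite /VK2 /=; have -> : (j <= i) = (j <= i - 1) by apply/idP/idP => H'; lia.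
  by rewrite /compat !eqxx.
- move=> _; rewrite /VK3 /=; have -> : (j <= 0) = false by lia. have -> : (j <= n) = true by lia.
  rewrite /compat; by case: c; case: e.
Qed.


Definition desc V rho := V <= n /\ rho <= n /\
  (V + 1 = rho \/ rho + 1 = V \/ (V = n /\ rho = 0) \/ (V = 0 /\ rho = n)).
Definition inK V rho Pp := Pp = V \/ Pp = V + (2*n+2) \/ Pp = 2*n+1 - rho.

Lemma F1 Pp Q Pp' Q' : PRE Pp Q Pp' Q' -> Pp <> Pp' -> Pp <= n -> Pp' <= n -> False.
Proof. rewrite /PRE /PRE0 => H *; dall; lia. Qed.
Lemma F2 Pp Q Pp' Q' : PRE Pp Q Pp' Q' -> Pp <> Pp' -> 2*n+1 < Pp -> 2*n+1 < Pp' -> False.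
Proof. rewrite /PRE /PRE0 => H *; dall; lia. Qed.
Lemma F3 Pp Q Pp' Q' : PRE Pp Q Pp' Q' -> Pp <> Pp' -> n < Pp <= 2*n+1 -> n < Pp' <= 2*n+1 -> False.
Proof. rewrite /PRE /PRE0 => H *; dall; lia. Qed.
Lemma F4 Pp Q Pp' Q' : PRE Pp Q Pp' Q' -> Pp <> Pp' -> Pp <= n -> 2*n+1 < Pp' -> Pp' = Pp + (2*n+2).
Proof. rewrite /PRE /PRE0 => H *; dall; lia. Qed.
Lemma F5a Pp Q Pp' Q' : PRE Pp Q Pp' Q' -> Pp <> Pp' -> n < Pp <= 2*n+1 -> Pp' <= n -> desc Pp' (2*n+1-Pp).
Proof. rewrite /PRE /PRE0 /desc => H *; dall; lia. Qed.
Lemma F5b Pp Q Pp' Q' : PRE Pp Q Pp' Q' -> Pp <> Pp' -> n < Pp <= 2*n+1 -> 2*n+1 < Pp' ->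
  desc (Pp' - (2*n+2)) (2*n+1-Pp).
Proof. rewrite /PRE /PRE0 /desc => H *; dall; lia. Qed.

Lemma PRE_sym Pp Q Pp' Q' : PRE Pp Q Pp' Q' -> PRE Pp' Q' Pp Q.
Proof. move=> [E [H|H]]; split; [lia| by right | lia | by left]. Qed.

Lemma posnN (m : 'I_N) : posn m < 3*n+3.
Proof. exact: (posn_lt (ltn_ord m)). Qed.

Lemma posn_neq (m m' : 'I_N) : m <> m' -> posn m <> posn m'.
Proof. move=> H E; apply: H; apply: val_inj; exact: (posn_inj (ltn_ord m) (ltn_ord m') E). Qed.

Lemma clique (a : P) : Good a -> exists V rho, desc V rho /\ forall m y, a m = Some y -> inK V rho (posn m).
Proof.
move=> Ga.
have pr : forall m m' y y', a m = Some y -> a m' = Some y' -> m <> m' ->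
   PRE (posn m) (posn y) (posn m') (posn y') /\ posn m <> posn m'.
  move=> m m' y y' H1 H2 Hne; split; [exact: Ga H1 H2 Hne | exact: posn_neq].
case: (pickP (fun m : 'I_N => (a m != None) && (n < posn m <= 2*n+1))) => [mM /andP [HM1 HM2]|HnoM].
- case EM: (a mM) HM1 => [yM|] // _.
  case: (pickP (fun m : 'I_N => (a m != None) && ~~ (n < posn m <= 2*n+1))) => [mO /andP [HO1 HO2]|HnoO].
  + case EO: (a mO) HO1 => [yO|] // _.
    have HMO : mM <> mO by move=> E; subst; rewrite HM2 in HO2.
    have [PR1 Hneq] := pr _ _ _ _ EM EO HMO.
    have BO := posnN mO.
    case: (leqP (posn mO) n) => Hlo.
    * exists (posn mO), (2*n+1 - posn mM); split; first exact: (F5a PR1 Hneq).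
      move=> m y Hm.
      case: (m =P mM) => [->|HmM]; first by right; right; have := posnN mM; lia.
      case: (m =P mO) => [->|HmO]; first by left.
      have [PR2 N2] := pr _ _ _ _ Hm EM HmM. have [PR3 N3] := pr _ _ _ _ Hm EO HmO.
      have := posnN m => Bm.
      case: (boolP (n < posn m <= 2*n+1)) => Hr; first by exfalso; apply: (F3 PR2 N2) => //; lia.
      case: (leqP (posn m) n) => Hl; first by exfalso; exact: (F1 PR3 N3).
      right; left; apply: (F4 (PRE_sym PR3)) => //; [by apply/nesym | lia].
    * exists (posn mO - (2*n+2)), (2*n+1 - posn mM); split.
        apply: (F5b PR1 Hneq) => //; lia.
      move=> m y Hm.
      case: (m =P mM) => [->|HmM]; first by right; right; have := posnN mM; lia.
      case: (m =P mO) => [->|HmO]; first by right; left; lia.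
      have [PR2 N2] := pr _ _ _ _ Hm EM HmM. have [PR3 N3] := pr _ _ _ _ Hm EO HmO.
      have := posnN m => Bm.
      case: (boolP (n < posn m <= 2*n+1)) => Hr; first by exfalso; apply: (F3 PR2 N2) => //; lia.
      case: (leqP (posn m) n) => Hl.
        left; have := F4 PR3 N3 Hl; lia.
      exfalso; apply: (F2 PR3 N3) => //; lia.
  + set rho := 2*n+1 - posn mM.
    have Hrho : rho <= n by rewrite /rho; lia.
    have key : forall m y, a m = Some y -> m = mM.
      move=> m y Hm; case: (m =P mM) => // HmM.
      have [PR2 N2] := pr _ _ _ _ Hm EM HmM.
      move: (HnoO m) => /=; rewrite Hm /= => /negbFE Hr.
      exfalso; apply: (F3 PR2 N2) => //; lia.
    case: (posnP rho) => Hr0.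
    * exists 1, rho; split; first by rewrite /desc; lia.
      move=> m y /key ->; right; right; rewrite /rho; have := posnN mM; lia.
    * exists (rho - 1), rho; split; first by rewrite /desc; lia.
      move=> m y /key ->; right; right; rewrite /rho; have := posnN mM; lia.
- case: (pickP (fun m : 'I_N => a m != None)) => [mO /= HO1|Hno].
  + case EO: (a mO) HO1 => [yO|] // _.
    have HOr : ~~ (n < posn mO <= 2*n+1) by move: (HnoM mO) => /=; rewrite EO /= => ->.
    have BO := posnN mO.
    set V := if posn mO <= n then posn mO else posn mO - (2*n+2).
    have HV : V <= n by rewrite /V; case: ifP; lia.
    have HVO : posn mO = V \/ posn mO = V + (2*n+2) by rewrite /V; case: ifP; lia.
    exists V, (if V < n then V + 1 else V - 1); split.
      by rewrite /desc; case: ifP; lia.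
    move=> m y Hm.
    case: (m =P mO) => [->|HmO]; first by case: HVO => H; [left|right;left].
    have [PR3 N3] := pr _ _ _ _ Hm EO HmO.
    have Hr : ~~ (n < posn m <= 2*n+1) by move: (HnoM m) => /=; rewrite Hm /= => ->.
    have := posnN m => Bm.
    case: (leqP (posn m) n) => Hl; case: (leqP (posn mO) n) => Hl'.
    * exfalso; exact: (F1 PR3 N3).
    * left; have := F4 PR3 N3 Hl; move: HVO; rewrite /V; case: ifP; lia.
    * right; left; have := F4 (PRE_sym PR3) (nesym N3) Hl'; move: HVO; rewrite /V; case: ifP; lia.
    * exfalso; apply: (F2 PR3 N3); lia.
  + exists 0, 1; split; first by rewrite /desc; lia.
    by move=> m y Hm; move: (Hno m) => /=; rewrite Hm.
Qed.

Lemma every_point Pp : Pp < 3*n+3 -> exists V rho, desc V rho /\ inK V rho Pp.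
Proof.
move=> H.
case: (leqP Pp n) => H1.
  case: (ltnP Pp n) => H2.
    exists Pp, (Pp+1); split; rewrite /desc /inK; lia.
  exists Pp, (Pp-1); split; rewrite /desc /inK; lia.
case: (leqP Pp (2*n+1)) => H3.
  case: (ltnP Pp (2*n+1)) => H4.
    exists (2*n+1 - Pp - 1), (2*n+1 - Pp); split; rewrite /desc /inK; lia.
  exists 1, 0; split; rewrite /desc /inK; lia.
case: (ltnP (Pp - (2*n+2)) n) => H5.
  exists (Pp - (2*n+2)), (Pp - (2*n+2) + 1); split; rewrite /desc /inK; lia.
exists (Pp - (2*n+2)), (Pp - (2*n+2) - 1); split; rewrite /desc /inK; lia.
Qed.



Lemma sepK f0 g f2 V rho A : desc V rho -> A < 3*n+3 ->
  (A <= n -> (A <> V -> f0 V != f0 A) /\ f2 V != f0 A /\ g rho != f0 A) ->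
  (n < A -> A <= 2*n+1 -> f0 V != g (2*n+1-A) /\ f2 V != g (2*n+1-A) /\
      (2*n+1-A <> rho -> g rho != g (2*n+1-A))) ->
  (2*n+1 < A -> f0 V != f2 (A-(2*n+2)) /\ (A-(2*n+2) <> V -> f2 V != f2 (A-(2*n+2))) /\
      g rho != f2 (A-(2*n+2))) ->
  forall B, inK V rho B -> B <> A -> kpos f0 g f2 B != kpos f0 g f2 A.
Proof.
move=> [HV [Hr _]] HA Clo Cmid Chi B HB HBA.
have EA : (A <= n /\ kpos f0 g f2 A = f0 A) \/ (n < A /\ A <= 2*n+1 /\ kpos f0 g f2 A = g (2*n+1-A))
    \/ (2*n+1 < A /\ kpos f0 g f2 A = f2 (A-(2*n+2))).
  case: (leqP A n) => h1; first by left; split => //; exact: kpos_lo.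
  case: (leqP A (2*n+1)) => h2; first by right; left; split; [lia| split; [lia| exact: kpos_mid]].
  by right; right; split => //; exact: kpos_hi.
case: HB => [EB|[EB|EB]]; subst B.
- rewrite kpos_lo //.
  case: EA => [[h1 ->]|[[h1 [h2 ->]]|[h1 ->]]].
  + have [c1 _] := Clo h1; apply: c1; exact/nesym.
  + by have [c1 _] := Cmid h1 h2.
  + by have [c1 _] := Chi h1.
- rewrite kpos_hi; last by lia. have -> : V + (2*n+2) - (2*n+2) = V by lia.
  case: EA => [[h1 ->]|[[h1 [h2 ->]]|[h1 ->]]].
  + by have [_ [c2 _]] := Clo h1.
  + by have [_ [c2 _]] := Cmid h1 h2.
  + have [_ [c2 _]] := Chi h1; apply: c2; lia.
- rewrite kpos_mid; [|lia|lia]. have -> : 2*n+1 - (2*n+1 - rho) = rho by lia.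
  case: EA => [[h1 ->]|[[h1 [h2 ->]]|[h1 ->]]].
  + by have [_ [_ c3]] := Clo h1.
  + have [_ [_ c3]] := Cmid h1 h2; apply: c3; lia.
  + by have [_ [_ c3]] := Chi h1.
Qed.

Lemma outer_fam V rho w : desc V rho -> w <= n -> w <> V ->
  exists f g, OKF f g f /\ f V != f w /\ g rho != f w.
Proof.
move=> [HV [Hr Hd]] Hw HwV.
case: (boolP (0 \in TS)) => H0; last first.
  exists (fun r => r != V), (fun r => ~~ (r != V)); split.
    by apply: OK_copy; rewrite H0 orbT.
  lia.
case: (boolP ((w == 0) && (rho == n))) => Hp1.
  have [j [j1 j2 j3]] := miss1 H0.
  exists (fun r => j <= r), (fun r => j <= r); split; first by apply: OK_J => //; lia.
  lia.
case: (boolP ((w == n) && (rho == 0))) => Hp2.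
  have [j [j1 j2 j3]] := miss2 H0.
  exists (fun r => j <= r), (fun r => j <= r); split; first by apply: OK_J => //; lia.
  lia.
case: (boolP ((V == 0) || (V == n))) => Hv.
  exists (fun r => r != V), (fun r => ~~ (r != V)); split.
    by apply: OK_copy; apply/orP; left; lia.
  lia.
case: (boolP ((w != 0) && (rho != 0))) => Hz.
  exists (fun r => (r != V) && (r != 0)), (fun r => ~~ ((r != V) && (r != 0))); split.
    by apply: OK_copy; apply/orP; left; lia.
  lia.
exists (fun r => (r != V) && (r != n)), (fun r => ~~ ((r != V) && (r != n))); split.
  by apply: OK_copy; apply/orP; left; lia.
lia.
Qed.

Lemma mid_fam V rho s : desc V rho -> s <= n ->
  exists f0 g f2, OKF f0 g f2 /\ f0 V != g s /\ f2 V != g s /\ (s <> rho -> g rho != g s).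
Proof.
move=> [HV [Hr Hd]] Hs.
case: (s =P rho) => Hsr.
  subst s.
  case: (boolP (((V == 0) && (rho == n)) || ((V == n) && (rho == 0)))) => Hp.
    have [j [j1 j2 j3]] := miss0.
    exists (fun r => j <= r), (fun r => j <= r), (fun r => j <= r); split; first by apply: OK_J => //; lia.
    split; first lia. split; first lia. by [].
  case: (boolP ((V == 0) || (rho == 0))) => Hz.
    exists (fun r => r <= 1), (fun r => ~~ (r <= 1)), (fun r => r <= 1); split.
      by apply: OK_copy; apply/orP; left; lia.
    split; first lia. split; first lia. by [].
  exists (fun r => minn V rho <= r), (fun r => ~~ (minn V rho <= r)), (fun r => minn V rho <= r); split.
    by apply: OK_copy; apply/orP; left; lia.
  split; first lia. split; first lia. by [].
case: (boolP (((V == 0) && (s == n)) || ((V == n) && (s == 0)))) => Hp.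
  case: (boolP (0 \in TS)) => H0.
    case: (boolP (V == 0)) => HV0.
      have [j [j1 j2 j3]] := miss2 H0.
      exists (fun r => j <= r), (fun r => j <= r), (fun r => j <= r); split; first by apply: OK_J => //; lia.
      split; first lia. split; first lia. move=> _; lia.
    have [j [j1 j2 j3]] := miss1 H0.
    exists (fun r => j <= r), (fun r => j <= r), (fun r => j <= r); split; first by apply: OK_J => //; lia.
    split; first lia. split; first lia. move=> _; lia.
  exists (fun r => (r == V) || (r == s)), (fun r => ~~ ((r == V) || (r == s))), (fun r => (r == V) || (r == s)).
  split; first by apply: OK_copy; rewrite H0 orbT.
  split; first lia. split; first lia. move=> _; lia.
case: (boolP [|| V == 0, V == n, s == 0 | s == n]) => Hz.
  exists (fun r => (r == V) || (r == s)), (fun r => ~~ ((r == V) || (r == s))), (fun r => (r == V) || (r == s)).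
  split; first by apply: OK_copy; apply/orP; left; lia.
  split; first lia. split; first lia. move=> _; lia.
case: (boolP (rho == 0)) => Hr0.
  exists (fun r => [|| r == V, r == s | r == n]), (fun r => ~~ [|| r == V, r == s | r == n]),
    (fun r => [|| r == V, r == s | r == n]).
  split; first by apply: OK_copy; apply/orP; left; lia.
  split; first lia. split; first lia. move=> _; lia.
exists (fun r => [|| r == V, r == s | r == 0]), (fun r => ~~ [|| r == V, r == s | r == 0]),
  (fun r => [|| r == V, r == s | r == 0]).
split; first by apply: OK_copy; apply/orP; left; lia.
split; first lia. split; first lia. move=> _; lia.
Qed.

Lemma Plemma V rho A : desc V rho -> A < 3*n+3 ->
  exists f0 g f2, OKF f0 g f2 /\ forall B, inK V rho B -> B <> A -> kpos f0 g f2 B != kpos f0 g f2 A.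
Proof.
move=> Hd HA.
case: (leqP A n) => h1.
  case: (A =P V) => HAV.
    have [j [j1 j2 j3]] := miss0.
    exists (fun _ => true), (fun r => (j <= r) (+) (j <= rho)), (fun _ => ~~ true); split.
      by apply: OK_B => //; lia.
    apply: sepK => //.
    all: try (move=> *; exfalso; lia).
    all: try (move=> _; split; [by move=> /(_ HAV) | by rewrite /= addbb]).
  have [f [g [Hok [c1 c2]]]] := outer_fam Hd h1 HAV.
  exists f, g, f; split => //.
  apply: sepK => //.
  all: try (move=> *; exfalso; lia).
  all: try (move=> _; split; [by move=> _ | by split]).
case: (leqP A (2*n+1)) => h2.
  have [f0 [g [f2 [Hok [c1 [c2 c3]]]]]] := @mid_fam V rho (2*n+1-A) Hd (ltac:(lia)).
  exists f0, g, f2; split => //.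
  apply: sepK => //.
  all: try (move=> *; exfalso; lia).
  all: try (move=> _ _; by split; [|split]).
case: ((A - (2*n+2)) =P V) => HwV.
  have [j [j1 j2 j3]] := miss0.
  exists (fun _ => false), (fun r => (j <= r) (+) (j <= rho)), (fun _ => ~~ false); split.
    by apply: OK_B => //; lia.
  apply: sepK => //.
  all: try (move=> *; exfalso; lia).
  all: try (move=> _; split; [by [] | split; [by move=> /(_ HwV) | by rewrite /= addbb]]).
have [f [g [Hok [c1 c2]]]] := @outer_fam V rho (A - (2*n+2)) Hd (ltac:(lia)) HwV.
exists f, g, f; split => //.
apply: sepK => //.
all: try (move=> *; exfalso; lia).
all: try (move=> _; split => //; split => //).
Qed.

Lemma goodK_F f0 g f2 (w : nat -> P) : (forall k, gen_seq X (w k)) -> OKF f0 g f2 ->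
  forall k, compatV (kapF f0 g f2) (w k).
Proof. move=> Hw Hok k; apply: validB_compat; exact: valid_gen Hok (Hw k). Qed.

Lemma H1L (w : nat -> P) : (forall k, gen_seq X (w k)) -> forall q q' : 'I_N, q <> q' ->
  exists kap, (forall k, compatV kap (w k)) /\ kap q <> kap q'.
Proof.
move=> Hw q q' Hne.
have [V [rho [Hd HK]]] := every_point (posnN q).
have [f0 [g [f2 [Hok Hsep]]]] := Plemma Hd (posnN q').
exists (kapF f0 g f2); split; first exact: goodK_F.
rewrite /kapF; apply/eqP; exact: Hsep HK (posn_neq Hne).
Qed.

Lemma H2L (w : nat -> P) : (forall k, gen_seq X (w k)) -> forall k a, w k a = None ->
  exists kap, (forall k, compatV kap (w k)) /\ forall x y, w k x = Some y -> kap x <> kap a.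
Proof.
move=> Hw k a Ha.
have [V [rho [Hd HK]]] := clique (Good_gen (Hw k)).
have [f0 [g [f2 [Hok Hsep]]]] := Plemma Hd (posnN a).
exists (kapF f0 g f2); split; first exact: goodK_F.
move=> x y Hxy; apply/eqP; apply: Hsep (HK _ _ Hxy) _.
apply: posn_neq => E; subst x; by rewrite Ha in Hxy.
Qed.

Lemma H3L (w : nat -> P) : (forall k, gen_seq X (w k)) -> forall k a, (forall x, w k x <> Some a) ->
  exists kap, (forall k, compatV kap (w k)) /\ forall x y, w k x = Some y -> kap y <> kap a.
Proof.
move=> Hw k a Ha.
have Gk := Good_gen (Hw k).
have [V [rho [Hd HK]]] := clique (Good_pinv Gk).
have [f0 [g [f2 [Hok Hsep]]]] := Plemma Hd (posnN a).
exists (kapF f0 g f2); split; first exact: goodK_F.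
move=> x y Hxy; apply/eqP; apply: Hsep (HK _ _ (pinvS (Good_inj Gk) Hxy)) _.
apply: posn_neq => E; subst y; exact: Ha Hxy.
Qed.

Lemma main_sec : in_var_B21 (gen_seq X).
Proof.
move=> s t Hst v Hv.
apply: AL => //.
- move=> k; exact: Good_inj (Good_gen (Hv k)).
- exact: H1L.
- exact: H2L.
- exact: H3L.
Qed.

End Sn.

Unset Implicit Arguments.

Theorem proposition5p1 (n : nat) (X : seq (pinj n)) :
  (2 <= n)%N ->
  (forall a, a \in X -> in_Sn a) ->
  (size X < n)%N ->
  in_var_B21 (gen_seq X).
Proof. move=> hn HX hsz; exact: (@main_sec n hn X HX hsz). Qed.
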